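(* A domain $R$ is a Prüfer $v$-multiplication domain (P$v$MD) if and only if every nonzero finitely generated ideal of $R$ is $w$-basic.
   Context: For a domain $R$ with quotient field $K$ and nonzero fractional ideal $I$: $I^{-1}=(R:I)=\{x\in K:xI\subseteq R\}$, $I_v=(I^{-1})^{-1}$, $I_t=\bigcup J_v$ over finitely generated subideals $J\subseteq I$; $I$ is a $t$-ideal if $I_t=I$; a maximal $t$-ideal is an ideal maximal among proper integral $t$-ideals. The $w$-operation is $I_w=\bigcup (I:J)$ over finitely generated ideals $J$ of $R$ with $J_v=R$ (equivalently $I_w=\bigcap_M IR_M$ over maximal $t$-ideals $M$). $R$ is a P$v$MD if every nonzero finitely generated ideal $I$ is $t$-invertible, i.e. $(II^{-1})_t=R$ (equivalently, $R_M$ is a valuation domain for each maximal $t$-ideal $M$). For a nonzero ideal $I$, an ideal $J\subseteq I$ is a $w$-reduction of $I$ if $(JI^n)_w=(I^{n+1})_w$ for some integer $n\ge0$; $I$ is $w$-basic if every $w$-reduction $J$ of $I$ satisfies $J_w=I_w$. *)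

(* Defs.v *)
From HB Require Import structures.
From mathcomp Require Import all_boot all_order all_algebra.
From mathcomp Require Import fraction.
Set Implicit Arguments. Unset Strict Implicit. Unset Printing Implicit Defensive.
Import GRing.Theory.
Local Open Scope ring_scope.

Section Defs.
Variable R : idomainType.
Local Notation K := {fraction R}.
Local Notation emb := (@FracField.tofrac R).

Definition Kset := K -> Prop.

Definition Rset : Kset := fun x => exists r : R, x = emb r.

Definition subset (A B : Kset) := forall x, A x -> B x.
Definition seteq (A B : Kset) := forall x, A x <-> B x.
Definition nonzero (A : Kset) := exists x, A x /\ x != 0.

Definition colon (A B : Kset) : Kset := fun x => forall b, B b -> A (x * b).
Definition inv (A : Kset) : Kset := colon Rset A.
Definition vop (A : Kset) : Kset := inv (inv A).

Definition fg (A : Kset) :=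
  exists s : seq K, forall x,
    A x <-> exists c : nat -> R, x = \sum_(i < size s) emb (c i) * s`_i.

Definition is_ideal (A : Kset) :=
  [/\ subset A Rset, A 0,
      forall x y, A x -> A y -> A (x + y)
    & forall r x, A x -> A (emb r * x)].

Definition prod (A B : Kset) : Kset := fun x =>
  exists s : seq (K * K), (forall p, p \in s -> A p.1 /\ B p.2) /\
    x = \sum_(p <- s) p.1 * p.2.

Fixpoint pw (A : Kset) (n : nat) : Kset :=
  match n with 0 => Rset | n'.+1 => prod (pw A n') A end.

Definition top (A : Kset) : Kset := fun x =>
  exists J, fg J /\ subset J A /\ vop J x.

Definition wop (A : Kset) : Kset := fun x =>
  exists J, is_ideal J /\ fg J /\ seteq (vop J) Rset /\ colon A J x.

Definition t_invertible (A : Kset) := seteq (top (prod A (inv A))) Rset.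

Definition PvMD := forall I, is_ideal I -> fg I -> nonzero I -> t_invertible I.

Definition w_reduction (J I : Kset) :=
  is_ideal J /\ subset J I /\
  exists n : nat, seteq (wop (prod J (pw I n))) (wop (pw I n.+1)).

Definition w_basic (I : Kset) :=
  forall J, w_reduction J I -> seteq (wop J) (wop I).
End Defs.

(* Main.v *)
From HB Require Import structures.
Require Import Defs.
From mathcomp Require Import all_boot all_order all_algebra.
From mathcomp Require Import fraction ring.
Set Implicit Arguments. Unset Strict Implicit. Unset Printing Implicit Defensive.
Import GRing.Theory.
Local Open Scope ring_scope.

Lemma alg1 (F : fieldType) (a b l rr ss : F) : a * b * l = rr * (a * a) + ss * (b * b) ->
  rr * a * (rr * a) = b * (- (rr * ss) * b + l * (rr * a)).
Proof.
move=> E; transitivity (rr * (a * b * l - ss * (b * b))); last by ring.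
by rewrite E; ring.
Qed.

Lemma alg2 (F : fieldType) (a b l rr ss : F) : a * b * l = rr * (a * a) + ss * (b * b) ->
  ss * b * (ss * b) = a * (- (rr * ss) * a + l * (ss * b)).
Proof.
move=> E; transitivity (ss * (a * b * l - rr * (a * a))); last by ring.
by rewrite E; ring.
Qed.

Lemma alg3 (F : fieldType) (a b l rr ss : F) : a != 0 -> b != 0 ->
  a * b * l = rr * (a * a) + ss * (b * b) -> l = a * (rr / b) + b * (ss / a).
Proof.
move=> a0 b0 E.
have -> : l = (a * b * l) / (a * b) by rewrite [a * b * l]mulrC mulfK // mulf_neq0.
by rewrite E; field; rewrite a0 b0.
Qed.

Lemma alg4 (F : fieldType) (z q b x u v : F) : z * b = z * (z * u + x * v) ->
  z * (q * b) = z * (q * z * u) + x * (q * z * v).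
Proof. by move=> E; rewrite mulrCA E; ring. Qed.

Lemma alg5 (F : fieldType) (q z u w : F) : q * z * u * w = (q * w) * (u * z).
Proof. by ring. Qed.

Section Infra.
Variable R : idomainType.
Local Notation K := {fraction R}.
Local Notation emb := (@FracField.tofrac R).
Local Notation Rs := (@Rset R).
Local Notation sub := (@Defs.subset R).
Local Notation inv := (@Defs.inv R).

Definition ismod (A : Kset R) :=
  [/\ A 0, forall x y, A x -> A y -> A (x + y) & forall r x, A x -> A (emb r * x)].

Lemma Rs_emb r : Rs (emb r). Proof. by exists r. Qed.
Lemma Rs0 : Rs 0. Proof. by exists 0; rewrite tofrac0. Qed.
Lemma Rs1 : Rs 1. Proof. by exists 1; rewrite tofrac1. Qed.
Lemma RsD x y : Rs x -> Rs y -> Rs (x + y).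
Proof. by move=> [a ->] [b ->]; exists (a + b); rewrite tofracD. Qed.
Lemma RsM x y : Rs x -> Rs y -> Rs (x * y).
Proof. by move=> [a ->] [b ->]; exists (a * b); rewrite tofracM. Qed.
Lemma RsN x : Rs x -> Rs (- x).
Proof. by move=> [a ->]; exists (- a); rewrite tofracN. Qed.
Lemma Rs_mod : ismod Rs.
Proof. split; [exact: Rs0|exact: RsD|by move=> r x Hx; apply: RsM => //; apply: Rs_emb]. Qed.

Lemma mod_sum (A : Kset R) (I : eqType) (s : seq I) (F : I -> K) :
  ismod A -> (forall i, i \in s -> A (F i)) -> A (\sum_(i <- s) F i).
Proof.
move=> [A0 AD _]; elim: s => [|i s IH] H; first by rewrite big_nil.
rewrite big_cons; apply: AD; first by apply: H; rewrite in_cons eqxx.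
by apply: IH => j Hj; apply: H; rewrite in_cons Hj orbT.
Qed.

Lemma mod_sum_ord (A : Kset R) n (F : 'I_n -> K) :
  ismod A -> (forall i, A (F i)) -> A (\sum_(i < n) F i).
Proof. by move=> HA H; apply: mod_sum. Qed.

Lemma modM (A : Kset R) x y : ismod A -> A x -> Rs y -> A (x * y).
Proof. by move=> [_ _ AM] Hx [r ->]; rewrite mulrC; apply: AM. Qed.

Lemma ideal_mod A : is_ideal A -> ismod A.
Proof. by case. Qed.

Definition gen (s : seq K) : Kset R := fun x =>
  exists c : nat -> R, x = \sum_(i < size s) emb (c i) * s`_i.

Lemma gen_mod s : ismod (gen s).
Proof.
split.
- by exists (fun _ => 0); rewrite big1 // => i _; rewrite tofrac0 mul0r.
- move=> x y [c ->] [d ->]; exists (fun i => c i + d i).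
  by rewrite -big_split /=; apply: eq_bigr => i _; rewrite tofracD mulrDl.
- move=> r x [c ->]; exists (fun i => r * c i); rewrite mulr_sumr.
  by apply: eq_bigr => i _; rewrite tofracM mulrA.
Qed.

Lemma gen_in s z : z \in s -> gen s z.
Proof.
move=> Hz; exists (fun i => if i == index z s then 1 else 0).
have Hi : (index z s < size s)%N by rewrite index_mem.
rewrite (bigD1 (Ordinal Hi)) //= eqxx tofrac1 mul1r nth_index //.
rewrite big1 ?addr0 // => i Hne; case: ifP; last by rewrite tofrac0 mul0r.
by move/eqP=> E; exfalso; move/eqP: Hne; apply; apply: val_inj.
Qed.

Lemma gen_min s A : ismod A -> (forall z, z \in s -> A z) -> forall x, gen s x -> A x.
Proof.
move=> HA H x [c ->]; apply: mod_sum_ord => // i.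
by case: HA => _ _ AM; apply: AM; apply: H; apply: mem_nth.
Qed.

Lemma gen_fg s : fg (gen s). Proof. by exists s. Qed.

Lemma fg_gen A : fg A -> exists s, seteq A (gen s).
Proof. by move=> [s Hs]; exists s. Qed.

Lemma gen_ideal s : (forall z, z \in s -> Rs z) -> is_ideal (gen s).
Proof.
move=> H; case: (gen_mod s) => G0 GD GM; split => //.
by move=> x; apply: gen_min => //; exact: Rs_mod.
Qed.


Lemma prod_elim (A B C : Kset R) :
  C 0 -> (forall x y, C x -> C y -> C (x + y)) ->
  (forall a b, A a -> B b -> C (a * b)) -> forall x, prod A B x -> C x.
Proof.
move=> C0 CD H x [s [Hs ->]]; elim: s Hs => [|p s IH] Hs; first by rewrite big_nil.
rewrite big_cons; apply: CD.
  by case: (Hs p); rewrite ?in_cons ?eqxx //; apply: H.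
by apply: IH => q Hq; apply: Hs; rewrite in_cons Hq orbT.
Qed.

Lemma prod_intro (A B : Kset R) a b : A a -> B b -> prod A B (a * b).
Proof.
move=> Ha Hb; exists [:: (a, b)]; split; last by rewrite big_seq1.
by move=> p; rewrite in_cons in_nil orbF => /eqP ->.
Qed.

Lemma prod0 (A B : Kset R) : prod A B 0.
Proof. by exists [::]; rewrite big_nil. Qed.

Lemma prodD (A B : Kset R) x y : prod A B x -> prod A B y -> prod A B (x + y).
Proof.
move=> [s [Hs ->]] [t [Ht ->]]; exists (s ++ t); split; last by rewrite big_cat.
by move=> p; rewrite mem_cat => /orP [] ?; [apply: Hs | apply: Ht].
Qed.

Lemma prod_mod (A B : Kset R) : ismod A -> ismod (prod A B).
Proof.
move=> HA; split; [exact: prod0 | exact: prodD |].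
move=> r; apply: prod_elim.
- by rewrite mulr0; apply: prod0.
- by move=> x y; rewrite mulrDr; apply: prodD.
- move=> a b Ha Hb; rewrite mulrA; apply: prod_intro => //.
  by case: HA => _ _; apply.
Qed.

Lemma prod_mod_r (A B : Kset R) : ismod B -> ismod (prod A B).
Proof.
move=> HB; split; [exact: prod0 | exact: prodD |].
move=> r; apply: prod_elim.
- by rewrite mulr0; apply: prod0.
- by move=> x y; rewrite mulrDr; apply: prodD.
- move=> a b Ha Hb; rewrite mulrCA; apply: prod_intro => //.
  by case: HB => _ _; apply.
Qed.

Lemma prod_mono (A B A' B' : Kset R) :
  sub A A' -> sub B B' -> sub (prod A B) (prod A' B').
Proof.
move=> HA HB; apply: prod_elim; [exact: prod0 | exact: prodD |].
by move=> a b Ha Hb; apply: prod_intro; [apply: HA | apply: HB].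
Qed.

Lemma mod_ext (A B : Kset R) : seteq A B -> ismod A -> ismod B.
Proof.
move=> E [A0 AD AM]; split; first by apply/E.
  by move=> x y /E Hx /E Hy; apply/E; apply: AD.
by move=> r x /E Hx; apply/E; apply: AM.
Qed.

Lemma inv_gen s y : inv (gen s) y <-> (forall z, z \in s -> Rs (y * z)).
Proof.
split; first by move=> H z Hz; apply: H; apply: gen_in.
move=> H b [c ->]; rewrite mulr_sumr; apply: mod_sum_ord; first exact: Rs_mod.
move=> i; rewrite mulrCA; apply: RsM; first exact: Rs_emb.
case: (ltnP i (size s)) => Hi; first by apply: H; apply: mem_nth.
by rewrite nth_default // mulr0; apply: Rs0.
Qed.

Lemma inv_ext (A B : Kset R) y : seteq A B -> inv A y -> inv B y.
Proof. by move=> E H b /E Hb; apply: H. Qed.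

Lemma inv_anti (A B : Kset R) : sub A B -> sub (inv B) (inv A).
Proof. by move=> H y Hy b Hb; apply: Hy; apply: H. Qed.

Lemma inv_Rs y : inv Rs y <-> Rs y.
Proof.
split; first by move=> H; rewrite -[y]mulr1; apply: H; apply: Rs1.
by move=> Hy b Hb; apply: RsM.
Qed.

Lemma sub_invinv (A : Kset R) : sub A (inv (inv A)).
Proof. by move=> a Ha b Hb; rewrite mulrC; apply: Hb. Qed.

Lemma Rs_inv (A : Kset R) y : sub A Rs -> Rs y -> inv A y.
Proof. by move=> HA Hy b Hb; apply: RsM => //; apply: HA. Qed.

Definition vt (J : Kset R) := [/\ is_ideal J, fg J & forall y, inv J y -> Rs y].

Lemma vt_vop J : vt J -> seteq (vop J) Rs.
Proof.
move=> [HI _ Hi] y; split.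
- move=> Hy; apply/inv_Rs => b Hb; apply: Hy; apply: Rs_inv => //; by case: HI.
- move=> Hy b Hb; rewrite mulrC; apply: RsM => //; exact: Hi.
Qed.

Lemma vop_vt J : is_ideal J -> fg J -> seteq (vop J) Rs -> vt J.
Proof.
move=> HI Hf E; split => // y Hy; apply/inv_Rs.
have : inv (inv (inv J)) y by apply: sub_invinv.
by apply: inv_ext.
Qed.

Lemma vtR : vt (gen [:: 1]).
Proof.
split; first by apply: gen_ideal => z; rewrite in_cons in_nil orbF => /eqP ->; apply: Rs1.
  exact: gen_fg.
by move=> y /inv_gen H; rewrite -[y]mulr1; apply: H; rewrite in_cons eqxx.
Qed.

Lemma genR_Rs x : gen [:: 1] x -> Rs x.
Proof. by apply: gen_min; [apply: Rs_mod | move=> z; rewrite in_cons in_nil orbF => /eqP ->; apply: Rs1]. Qed.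

Lemma Rs_genR x : Rs x -> gen [:: 1] x.
Proof. move=> [r ->]; rewrite -[emb r]mulr1; case: (gen_mod [:: 1]) => _ _; apply; apply: gen_in; by rewrite in_cons eqxx. Qed.

Lemma vt_prod L1 L2 : vt L1 -> vt L2 -> exists M, vt M /\
  forall C, ismod C -> (forall a b, L1 a -> L2 b -> C (a * b)) -> sub M C.
Proof.
move=> [I1 [s1 E1] V1] [I2 [s2 E2] V2].
exists (gen [seq a * b | a <- s1, b <- s2]); split.
- split; last first.
  + move=> y /inv_gen Hy; apply: V1 => b /E1 Hb.
    move: b Hb; apply/inv_gen => a Ha; apply: V2 => c /E2 Hc.
    move: c Hc; apply/inv_gen => b Hb; rewrite -mulrA; apply: Hy.
    by apply: allpairs_f.
  + exact: gen_fg.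
  + apply: gen_ideal => z /allpairsP [[a b] [Ha Hb ->]] /=.
    case: I1 => S1 _ _ _; case: I2 => S2 _ _ _.
    by apply: RsM; [apply: S1; apply/E1; apply: gen_in | apply: S2; apply/E2; apply: gen_in].
- move=> C HC H; apply: gen_min => // z /allpairsP [[a b] [Ha Hb ->]] /=.
  by apply: H; [apply/E1; apply: gen_in | apply/E2; apply: gen_in].
Qed.

Lemma ideal_mulr (J : Kset R) a b : is_ideal J -> J a -> Rs b -> J (a * b).
Proof. move=> HJ; apply: modM; exact: ideal_mod. Qed.

Lemma vt_prod_sub L1 L2 : vt L1 -> vt L2 -> exists M, [/\ vt M, sub M L1, sub M L2 &
  forall C, ismod C -> (forall a b, L1 a -> L2 b -> C (a * b)) -> sub M C].
Proof.
move=> H1 H2; have [M [HM HC]] := vt_prod H1 H2; exists M; split => //.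
- apply: HC; first by apply: ideal_mod; case: H1.
  move=> a b Ha Hb; apply: ideal_mulr => //; first by case: H1.
  by case: H2 => [[S _ _ _] _ _]; apply: S.
- apply: HC; first by apply: ideal_mod; case: H2.
  move=> a b Ha Hb; rewrite mulrC; apply: ideal_mulr => //; first by case: H2.
  by case: H1 => [[S _ _ _] _ _]; apply: S.
Qed.

Lemma vt_family (s : seq K) (Phi : K -> K -> Prop) :
  (forall z, z \in s -> exists L, vt L /\ forall m, L m -> Phi z m) ->
  exists M, vt M /\ forall z, z \in s -> forall m, M m -> Phi z m.
Proof.
elim: s => [|z s IH] H.
  by exists (gen [:: 1]); split => //; exact: vtR.
have [M [HM HMP]] : exists M, vt M /\ forall z, z \in s -> forall m, M m -> Phi z m.
  by apply: IH => y Hy; apply: H; rewrite in_cons Hy orbT.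
have [L [HL HLP]] := H z (mem_head _ _).
have [N [HN S1 S2 _]] := vt_prod_sub HL HM.
exists N; split => // y; rewrite in_cons => /orP [/eqP -> | Hy] m Hm.
  by apply: HLP; apply: S1.
by apply: HMP => //; apply: S2.
Qed.

Lemma mod_mull (A : Kset R) c : ismod A -> ismod (fun y => A (c * y)).
Proof.
move=> [A0 AD AM]; split; first by rewrite mulr0.
  by move=> x y Hx Hy; rewrite mulrDr; apply: AD.
by move=> r x Hx; rewrite mulrCA; apply: AM.
Qed.

Lemma mod_mulr (A : Kset R) c : ismod A -> ismod (fun y => A (y * c)).
Proof.
move=> HA; apply: (mod_ext (A := fun y => A (c * y))); last exact: mod_mull.
by move=> y; rewrite mulrC.
Qed.

Lemma wop_unpack (A : Kset R) x : wop A x -> exists L, vt L /\ forall b, L b -> A (x * b).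
Proof. by move=> [J [HI [Hf [E H]]]]; exists J; split => //; apply: vop_vt. Qed.

Lemma wop_pack (A : Kset R) x L : vt L -> (forall b, L b -> A (x * b)) -> wop A x.
Proof.
move=> HL H; exists L; split; first by case: HL.
split; first by case: HL.
by split => //; apply: vt_vop.
Qed.

Lemma wop_mono (A B : Kset R) : sub A B -> sub (wop A) (wop B).
Proof.
move=> S x /wop_unpack [L [HL H]]; apply: (wop_pack HL) => b Hb; apply: S; exact: H.
Qed.

Lemma wop_ext (A B : Kset R) : seteq A B -> seteq (wop A) (wop B).
Proof. by move=> E x; split; apply: wop_mono => y /E. Qed.

Lemma sub_wop (A : Kset R) : ismod A -> sub A (wop A).
Proof.
move=> HA x Hx; apply: (wop_pack vtR) => b /genR_Rs Hb; exact: modM.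
Qed.

Lemma wop_mod (A : Kset R) : ismod A -> ismod (wop A).
Proof.
move=> HA; have HA' := HA; case: HA' => A0 AD AM; split.
- by apply: (wop_pack vtR) => b _; rewrite mul0r.
- move=> x y /wop_unpack [L1 [H1 P1]] /wop_unpack [L2 [H2 P2]].
  have [M [HM S1 S2 _]] := vt_prod_sub H1 H2.
  apply: (wop_pack HM) => b Hb; rewrite mulrDl; apply: AD.
    by apply: P1; apply: S1.
  by apply: P2; apply: S2.
- move=> r x /wop_unpack [L [HL P]]; apply: (wop_pack HL) => b Hb.
  by rewrite -mulrA; apply: AM; apply: P.
Qed.

Lemma wop_idem (A : Kset R) x : ismod A -> wop (wop A) x -> wop A x.
Proof.
move=> HA /wop_unpack [L [HL P]].
have HL' := HL; case: HL' => _ [s E] _.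
have [M [HM PM]] : exists M, vt M /\ forall z, z \in s -> forall m, M m -> A (x * z * m).
  apply: vt_family => z Hz.
  have /wop_unpack [Lz [HLz Pz]] : wop A (x * z) by apply: P; apply/E; apply: gen_in.
  by exists Lz.
have [N [HN HC]] := vt_prod HL HM.
apply: (wop_pack HN); apply: HC; first exact: mod_mull.
move=> a b /E Ha Hb; move: a Ha.
apply: (gen_min (A := fun a => A (x * (a * b)))).
  apply: (mod_ext (A := fun a => A ((x * b) * a))); last exact: mod_mull.
  by move=> y; rewrite [y * b]mulrC mulrA.
by move=> z Hz; rewrite mulrA; apply: PM.
Qed.

Lemma pw_mod (I : Kset R) n : ismod I -> ismod (pw I n).
Proof. by move=> HI; case: n => [|n] /=; [exact: Rs_mod | exact: prod_mod_r]. Qed.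

Lemma ideal_ext (A B : Kset R) : seteq A B -> is_ideal A -> is_ideal B.
Proof.
move=> E [S A0 AD AM]; have [B0 BD BM] := mod_ext E (And3 A0 AD AM).
by split => // x /E; apply: S.
Qed.

Lemma fg_ideal (J : Kset R) : fg J -> sub J Rs -> is_ideal J.
Proof.
move=> [s Hs] S; apply: (ideal_ext (A := gen s)); first by move=> x; split => /Hs.
by apply: gen_ideal => z Hz; apply: S; apply/Hs; apply: gen_in.
Qed.

Lemma prod_inv_Rs (I : Kset R) : sub I Rs -> sub (prod I (inv I)) Rs.
Proof.
move=> S; apply: prod_elim; [exact: Rs0 | exact: RsD |].
by move=> a b Ha Hb; rewrite mulrC; apply: Hb.
Qed.

Lemma shift_pw (J I : Kset R) n y q : ismod I -> inv I q ->
  prod J (pw I n.+1) y -> prod J (pw I n) (y * q).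
Proof.
move=> HI Hq; apply: (prod_elim (C := fun y => prod J (pw I n) (y * q))).
- by rewrite mul0r; apply: prod0.
- by move=> a b Ha Hb; rewrite mulrDl; apply: prodD.
- move=> a b Ha Hb; rewrite -mulrA; apply: prod_intro => //.
  move: b Hb; apply: (prod_elim (C := fun b => pw I n (b * q))).
  + by rewrite mul0r; case: (pw_mod n HI).
  + by move=> a' b' Ha' Hb'; rewrite mulrDl; case: (pw_mod n HI) => _ D _; apply: D.
  + move=> m i Hm Hi; rewrite -mulrA; apply: modM => //; first exact: pw_mod.
    by rewrite mulrC; apply: Hq.
Qed.

Lemma shift_wop (J I : Kset R) n w q : ismod I -> inv I q ->
  wop (prod J (pw I n.+1)) w -> wop (prod J (pw I n)) (w * q).
Proof.
move=> HI Hq /wop_unpack [L [HL P]]; apply: (wop_pack HL) => b Hb.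
by rewrite mulrAC; apply: shift_pw => //; apply: P.
Qed.

Lemma dir1 : PvMD R -> forall I : Kset R, is_ideal I -> fg I -> nonzero I -> w_basic I.
Proof.
move=> HP I HI HfI HnzI J [HJ [SJ [n E]]].
have HImod : ismod I by case: HI.
have HJmod : ismod J by case: HJ.
have [J' [fJ' [SJ' vJ']]] : top (prod I (inv I)) 1 by apply/(HP I HI HfI HnzI); exact: Rs1.
have vtJ' : vt J'.
  split => //; first by apply: fg_ideal => // x /SJ'; apply: prod_inv_Rs; case: HI.
  by move=> y Hy; rewrite -[y]mul1r; apply: vJ'.
suff claim : forall n, sub (wop (pw I n.+1)) (wop (prod J (pw I n))) -> sub (wop I) (wop J).
  move=> x; split; first exact: wop_mono.
  by apply: (claim n) => y Hy; apply/E.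
elim=> [|k IH] H.
- move=> x Hx; apply: (wop_mono (A := prod J Rs)).
    apply: prod_elim => //; [by case: HJmod | by case: HJmod | by move=> a b Ha Hb; apply: modM].
  apply: H; apply: (wop_mono (A := I)) => // y Hy.
  by rewrite -[y]mul1r; apply: prod_intro => //; exact: Rs1.
- apply: IH => y /wop_unpack [Ly [HLy Py]].
  have HA : ismod (prod J (pw I k)) by apply: prod_mod_r; apply: pw_mod.
  apply: wop_idem => //.
  have [M [HM HC]] := vt_prod HLy vtJ'.
  apply: (wop_pack HM); apply: HC; first by apply: mod_mull; apply: wop_mod.
  move=> a j Ha Hj; rewrite mulrA; have Hj2 := SJ' j Hj; clear Hj; move: j Hj2.
  apply: prod_elim; first by rewrite mulr0; case: (wop_mod HA).
    by move=> u v Hu Hv; rewrite mulrDr; case: (wop_mod HA) => _ D _; apply: D.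
  move=> i q Hi Hq; rewrite mulrA; apply: shift_wop => //.
  apply: H; apply: sub_wop; first exact: (pw_mod k.+2 HImod).
  by apply: prod_intro => //; apply: Py.
Qed.

Lemma tinv_of (I : Kset R) : is_ideal I ->
  (exists L, vt L /\ sub L (prod I (inv I))) -> t_invertible I.
Proof.
move=> HI [L [HL S]] x; split.
- move=> [J [fJ [SJ HJ]]].
  have SJR : sub J Rs by move=> y /SJ; apply: prod_inv_Rs; case: HI.
  have H2 : inv (inv Rs) x.
    exact: (inv_anti (inv_anti SJR)) HJ.
  by rewrite -[x]mulr1; apply: H2; apply/inv_Rs; exact: Rs1.
- move=> Hx; exists L; split; first by case: HL.
  by split => //; apply/(vt_vop HL).
Qed.

Lemma prodRs_eq (A : Kset R) : ismod A -> seteq (prod Rs A) A.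
Proof.
move=> HA x; split.
- apply: prod_elim; [by case: HA | by case: HA |].
  by move=> a b Ha Hb; rewrite mulrC; apply: modM.
- by move=> Hx; rewrite -[x]mul1r; apply: prod_intro => //; exact: Rs1.
Qed.

Lemma prod_gen_gen (C : Kset R) s t : ismod C ->
  (forall z1 z2, z1 \in s -> z2 \in t -> C (z1 * z2)) -> sub (prod (gen s) (gen t)) C.
Proof.
move=> HC H; apply: prod_elim; [by case: HC | by case: HC |].
move=> a b Ha Hb; move: a Ha; apply: (gen_min (A := fun a => C (a * b))).
  exact: mod_mulr.
move=> z1 Hz1; move: b Hb; apply: gen_min; first exact: mod_mull.
by move=> z2 Hz2; apply: H.
Qed.

Lemma gen1 b x : gen [:: b] x -> exists r, x = emb r * b.
Proof. by move=> [c ->]; exists (c 0%N); rewrite big_ord1. Qed.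

Lemma gen2 a b x : gen [:: a; b] x -> exists r s, x = emb r * a + emb s * b.
Proof. by move=> [c ->]; exists (c 0%N), (c 1%N); rewrite !big_ord_recl big_ord0 addr0. Qed.

Lemma gen2_in a b r s : gen [:: a; b] (emb r * a + emb s * b).
Proof.
case: (gen_mod [:: a; b]) => _ D M; apply: D; apply: M; apply: gen_in;
  by rewrite !in_cons eqxx ?orbT.
Qed.

Lemma gen3_in a b c z : z \in [:: a; b; c] -> gen [:: a; b; c] z.
Proof. exact: gen_in. Qed.

Lemma red_set (J I : Kset R) : ismod I -> sub J I ->
  sub (prod I I) (prod J (prod Rs I)) ->
  seteq (wop (prod J (pw I 1))) (wop (pw I 2)).
Proof.
move=> HI SJI H; apply: wop_ext => x /=; split.
- apply: prod_mono; first by move=> y /SJI Hy; apply/prodRs_eq.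
  by move=> y /(prodRs_eq HI).
- by move=> Hx; apply: H; move: Hx; apply: prod_mono => // y /(prodRs_eq HI).
Qed.

Section Basic.
Hypothesis HB : forall I : Kset R, is_ideal I -> fg I -> nonzero I -> w_basic I.

Lemma int2 b y w : Rs b -> b != 0 -> Rs y -> gen [:: b; y] w -> y * y = b * w ->
  Rs (y / b).
Proof.
move=> Rb b0 Ry Hw Eyy.
have Hs : forall z, z \in [:: b; y] -> Rs z.
  by move=> z; rewrite !in_cons in_nil orbF => /orP [] /eqP ->.
have HI := gen_ideal Hs.
have HJ : is_ideal (gen [:: b]).
  by apply: gen_ideal => z; rewrite in_cons in_nil orbF => /eqP ->.
have SJI : sub (gen [:: b]) (gen [:: b; y]).
  by apply: gen_min; [exact: gen_mod | move=> z; rewrite in_cons in_nil orbF => /eqP ->; apply: gen_in; rewrite mem_head].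
have HIm := gen_mod [:: b; y].
have E : seteq (wop (gen [:: b])) (wop (gen [:: b; y])).
  apply: HB => //; first exact: gen_fg.
    by exists b; split => //; apply: gen_in; rewrite mem_head.
  split => //; split => //; exists 1%N.
  apply: red_set => //; apply: prod_gen_gen; first by apply: prod_mod_r; apply: prod_mod_r.
  move=> z1 z2; rewrite !in_cons !in_nil !orbF => /orP [] /eqP -> /orP [] /eqP ->.
  + by apply: prod_intro; [apply: gen_in; rewrite mem_head | apply/(prodRs_eq HIm); apply: gen_in; rewrite mem_head].
  + by apply: prod_intro; [apply: gen_in; rewrite mem_head | apply/(prodRs_eq HIm); apply: gen_in; rewrite !in_cons eqxx orbT].
  + by rewrite mulrC; apply: prod_intro; [apply: gen_in; rewrite mem_head | apply/(prodRs_eq HIm); apply: gen_in; rewrite !in_cons eqxx orbT].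
  + by rewrite Eyy; apply: prod_intro; [apply: gen_in; rewrite mem_head | apply/(prodRs_eq HIm)].
have : wop (gen [:: b]) y.
  by apply/E; apply: sub_wop => //; apply: gen_in; rewrite !in_cons eqxx orbT.
move=> /wop_unpack [L [HL P]]; case: HL => _ _ V; apply: V => l Hl.
have [r Er] := gen1 (P l Hl).
by rewrite mulrAC Er mulfK //; apply: Rs_emb.
Qed.

Lemma pair_nz a b : Rs a -> Rs b -> a != 0 -> b != 0 ->
  exists L, vt L /\ forall m, L m -> exists u v,
    [/\ Rs (u * a), Rs (u * b), Rs (v * a), Rs (v * b) & a * m = a * (a * u + b * v)].
Proof.
move=> Ra Rb a0 b0.
set s1 := [:: a * a; a * b; b * b].
set t1 := [:: a * a; b * b].
have Hs : forall z, z \in s1 -> Rs z.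
  by move=> z; rewrite !in_cons in_nil orbF => /orP [/eqP -> | /orP [] /eqP ->]; apply: RsM.
have Ht : forall z, z \in t1 -> Rs z.
  by move=> z; rewrite !in_cons in_nil orbF => /orP [] /eqP ->; apply: RsM.
have HI := gen_ideal Hs.
have HJ := gen_ideal Ht.
have HIm := gen_mod s1.
have SJI : sub (gen t1) (gen s1).
  apply: gen_min => //; move=> z; rewrite !in_cons in_nil orbF => /orP [] /eqP -> ;
    by apply: gen_in; rewrite !in_cons eqxx ?orbT.
have inI : forall z, z \in s1 -> prod Rs (gen s1) z.
  by move=> z Hz; apply/(prodRs_eq HIm); apply: gen_in.
have inJ : forall z, z \in t1 -> gen t1 z by move=> z; apply: gen_in.
have E : seteq (wop (gen t1)) (wop (gen s1)).
  apply: HB => //; first exact: gen_fg.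
    exists (a * a); split; first by apply: gen_in; rewrite mem_head.
    by rewrite mulf_neq0.
  split => //; split => //; exists 1%N.
  apply: red_set => //; apply: prod_gen_gen; first by apply: prod_mod_r; apply: prod_mod_r.
  move=> z1 z2 Hz1 Hz2.
  move: Hz1; rewrite !in_cons in_nil orbF => /orP [/eqP -> | /orP [/eqP -> | /eqP ->]].
  + by apply: prod_intro; [apply: inJ; rewrite mem_head | apply: inI].
  + move: Hz2; rewrite !in_cons in_nil orbF => /orP [/eqP -> | /orP [/eqP -> | /eqP ->]].
    * by rewrite mulrC; apply: prod_intro; [apply: inJ; rewrite mem_head | apply: inI; rewrite !in_cons eqxx orbT].
    * have -> : a * b * (a * b) = (a * a) * (b * b) by rewrite mulrACA.
      by apply: prod_intro; [apply: inJ; rewrite mem_head | apply: inI; rewrite !in_cons eqxx !orbT].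
    * by rewrite mulrC; apply: prod_intro; [apply: inJ; rewrite !in_cons eqxx orbT | apply: inI; rewrite !in_cons eqxx !orbT].
  + by apply: prod_intro; [apply: inJ; rewrite !in_cons eqxx orbT | apply: inI].
have : wop (gen t1) (a * b).
  by apply/E; apply: sub_wop => //; apply: gen_in; rewrite !in_cons eqxx orbT.
move=> /wop_unpack [L [HL P]]; exists L; split => // l Hl.
have Rl : Rs l by case: HL => [[S _ _ _] _ _]; apply: S.
have [r [s El]] := gen2 (P l Hl).
set rr := emb r; set ss := emb s.
have ab0 : a * b != 0 by rewrite mulf_neq0.
have H1 : Rs (rr * a / b).
  case: Rl => l0 El0.
  apply: (@int2 b (rr * a) (emb (- (r * s)) * b + emb l0 * (rr * a))) => //.
  - by apply: RsM => //; apply: Rs_emb.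
  - exact: gen2_in.
  - by rewrite tofracN tofracM -/rr -/ss -El0; apply: alg1.
have H2 : Rs (ss * b / a).
  case: Rl => l0 El0.
  apply: (@int2 a (ss * b) (emb (- (r * s)) * a + emb l0 * (ss * b))) => //.
  - by apply: RsM => //; apply: Rs_emb.
  - exact: gen2_in.
  - by rewrite tofracN tofracM -/rr -/ss -El0; apply: alg2.
exists (rr / b), (ss / a); split.
- by rewrite mulrAC.
- by rewrite divfK //; apply: Rs_emb.
- by rewrite divfK //; apply: Rs_emb.
- by rewrite mulrAC.
- by congr (a * _); apply: alg3.
Qed.

Lemma pairG z x : Rs z -> Rs x ->
  exists L, vt L /\ forall m, L m -> exists u v,
    [/\ Rs (u * z), Rs (u * x), Rs (v * z), Rs (v * x) & z * m = z * (z * u + x * v)].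
Proof.
move=> Rz Rx; have [->|z0] := eqVneq z 0.
  exists (gen [:: 1]); split; first exact: vtR.
  move=> m _; exists 0, 0; rewrite !mul0r; split => //; exact: Rs0.
have [->|x0] := eqVneq x 0; last exact: pair_nz.
exists (gen [:: 1]); split; first exact: vtR.
move=> m /genR_Rs Rm; exists (m / z), 0; rewrite !mul0r !mulr0 addr0.
split; [by rewrite divfK | exact: Rs0 | exact: Rs0 | exact: Rs0 |].
by rewrite [z * (m / z)]mulrC divfK.
Qed.

Lemma T_ind s : (forall z, z \in s -> Rs z) -> has (fun z => z != 0) s ->
  exists L, vt L /\ sub L (prod (gen s) (inv (gen s))).
Proof.
elim: s => [|x s IH] // Hs Hnz.
have HP : ismod (prod (gen (x :: s)) (inv (gen (x :: s)))) by apply: prod_mod; exact: gen_mod.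
have Rx : Rs x by apply: Hs; rewrite mem_head.
have Hs' : forall z, z \in s -> Rs z by move=> z Hz; apply: Hs; rewrite in_cons Hz orbT.
case Hns: (has (fun z => z != 0) s); last first.
  have x0 : x != 0 by move: Hnz; rewrite /= Hns orbF.
  exists (gen [:: 1]); split; first exact: vtR.
  apply: gen_min => // z; rewrite in_cons in_nil orbF => /eqP ->.
  rewrite -(mulfV x0); apply: prod_intro; first by apply: gen_in; rewrite mem_head.
  apply/inv_gen => w; rewrite in_cons => /orP [/eqP -> | Hw].
    by rewrite mulVf //; exact: Rs1.
  have /eqP -> : w == 0.
    by apply: contraFT Hns => Hw0; apply/hasP; exists w.
  by rewrite mulr0; exact: Rs0.
have [L' [HL' SL']] := IH Hs' Hns.
have [M [HM PM]] := vt_family (Phi := fun z m => exists u v,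
    [/\ Rs (u * z), Rs (u * x), Rs (v * z), Rs (v * x) & z * m = z * (z * u + x * v)])
    (s := s) (fun z Hz => pairG (Hs' z Hz) Rx).
have [N [HN HC]] := vt_prod HL' HM.
exists N; split => //; apply: HC => // a b /SL' Ha Hb.
move: a Ha; apply: (prod_elim (C := fun a => prod (gen (x :: s)) (inv (gen (x :: s))) (a * b))).
- by rewrite mul0r; apply: prod0.
- by move=> u v Hu Hv; rewrite mulrDl; apply: prodD.
move=> g q Hg Hq; rewrite -mulrA; move: g Hg.
apply: (gen_min (A := fun g => prod (gen (x :: s)) (inv (gen (x :: s))) (g * (q * b)))).
  exact: mod_mulr.
move=> z Hz; have [u [v [Ruz Rux Rvz Rvx Ez]]] := PM z Hz b Hb.
have Rqz : forall w, w \in s -> Rs (q * w) by apply/inv_gen.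
have -> : z * (q * b) = z * (q * z * u) + x * (q * z * v).
  exact: alg4.
apply: prodD; apply: prod_intro.
- by apply: gen_in; rewrite in_cons Hz orbT.
- apply/inv_gen => w; rewrite in_cons => /orP [/eqP -> | Hw].
    by rewrite -mulrA; apply: RsM; [apply: Rqz Hz | ].
  by rewrite alg5; apply: RsM; [apply: Rqz Hw | ].
- by apply: gen_in; rewrite mem_head.
- apply/inv_gen => w; rewrite in_cons => /orP [/eqP -> | Hw].
    by rewrite -mulrA; apply: RsM; [apply: Rqz Hz | ].
  by rewrite alg5; apply: RsM; [apply: Rqz Hw | ].
Qed.

Lemma dir2 : PvMD R.
Proof.
move=> I HI [s Es] [x0 [Hx0 x0nz]]; apply: tinv_of => //.
have Hs : forall z, z \in s -> Rs z.
  by move=> z Hz; case: HI => S _ _ _; apply: S; apply/Es; apply: gen_in.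
have Hnz : has (fun z => z != 0) s.
  apply/negPn/negP => /hasPn Hall; move/negP: x0nz; apply; apply/eqP.
  have Hg := proj1 (Es x0) Hx0; clear Hx0; move: x0 Hg; apply: (gen_min (A := fun y => y = 0)).
    by split => //; [move=> ? ? -> ->; rewrite addr0 | move=> r ? ->; rewrite mulr0].
  by move=> z /Hall; rewrite negbK => /eqP.
have [L [HL SL]] := T_ind Hs Hnz.
exists L; split => // y /SL; apply: prod_mono; first by move=> w /Es.
by move=> w Hw; apply: (inv_ext (A := gen s)) => // t; split => /Es.
Qed.
End Basic.
End Infra.

Theorem theorem2p1 (R : idomainType) :
  PvMD R <->
  (forall I : Kset R, is_ideal I -> fg I -> nonzero I -> w_basic I).
Proof.
split; first exact: dir1.
exact: dir2.
Qed.
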